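(* Let $\alpha\in(0,\infty)$, $\beta\in(0,1]$, and let $Y$ be a non-negative random variable with $\mathbb{E}Y^2<\infty$ and $\mathrm{Var}\,Y\leq\mathbb{E}Y=:\mu$. Then $$\mathbb{E}\frac{1}{(\alpha+Y)^\beta}\leq\frac{\widetilde C(\alpha,\beta)}{(\alpha+\mu)^\beta},$$ where $\widetilde C(\alpha,\beta)=\sup_{x\in[0,\infty)}h(x)$ with $h(x)=\frac{(\alpha+x)^\beta}{1+x}\big(\frac{x}{(\alpha+1+x)^\beta}+\frac{1}{\alpha^\beta}\big)$. Moreover, for fixed $\alpha$ and $\beta$ the factor $\widetilde C(\alpha,\beta)$ cannot be replaced by a smaller constant (in the sense that the inequality with a smaller constant fails for some such $Y$). *)

(* Defs.v *)
From HB Require Import structures.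
From mathcomp Require Import all_boot all_order all_algebra.
From mathcomp Require Import all_classical all_reals all_analysis.
Set Implicit Arguments. Unset Strict Implicit. Unset Printing Implicit Defensive.
Import Order.TTheory GRing.Theory Num.Theory.
Local Open Scope classical_set_scope.
Local Open Scope ring_scope.

Definition h_fun (R : realType) (alpha beta x : R) : R :=
  (alpha + x) `^ beta / (1 + x) *
  (x / (alpha + 1 + x) `^ beta + 1 / alpha `^ beta).

Definition Ctilde (R : realType) (alpha beta : R) : R :=
  sup [set h_fun alpha beta x | x in `[0, +oo[%classic].

(* Main.v *)
Require Import Defs.
From HB Require Import structures.
From mathcomp Require Import all_boot all_order all_algebra.
From mathcomp Require Import all_classical all_reals all_analysis.
From mathcomp Require Import ring lra measurable_realfun.
Import Order.TTheory GRing.Theory Num.Theory.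
Import numFieldTopology.Exports numFieldNormedType.Exports.
Local Open Scope classical_set_scope.
Local Open Scope ring_scope.

Section derivs.
Context {R : realType}.
Implicit Types (f g : R -> R) (x df dg : R).

Record isd (x : R) (f : R -> R) (df : R) : Prop := Isd { isd_d : is_derive x 1 f df }.

Lemma isd_eq f x df df' : isd x f df -> df = df' -> isd x f df'.
Proof. by move=> h <-. Qed.

Lemma isdD f g x df dg : isd x f df -> isd x g dg ->
  isd x (fun y => f y + g y) (df + dg).
Proof. by move=> [hf] [hg]; constructor; exact: is_deriveD. Qed.

Lemma isdB f g x df dg : isd x f df -> isd x g dg ->
  isd x (fun y => f y - g y) (df - dg).
Proof. by move=> [hf] [hg]; constructor; exact: is_deriveB. Qed.

Lemma isdM f g x df dg : isd x f df -> isd x g dg ->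
  isd x (fun y => f y * g y) (f x * dg + g x * df).
Proof. by move=> [hf] [hg]; constructor; exact: is_deriveM. Qed.

Lemma isdZ k f x df : isd x f df ->
  isd x (fun y => k * f y) (k * df).
Proof. by move=> [hf]; constructor; exact: is_deriveZ. Qed.

Lemma isdC (c x : R) : isd x (fun _ : R => c) 0.
Proof. constructor; exact: is_derive_cst. Qed.

Lemma isdI x : isd x (fun y : R => y) 1.
Proof. constructor; exact: is_derive_id. Qed.

Lemma isdP r x : 0 < x -> isd x (fun y : R => y `^ r) (r * x `^ (r - 1)).
Proof. by move=> x0; constructor; exact: is_derive1_powR. Qed.

Lemma isdV f x df : isd x f df -> f x != 0 ->
  isd x (fun y => (f y)^-1) (- (f x)^-2 * df).
Proof.
move=> [hf] fx0; constructor; apply: DeriveDef.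
  by apply: derivableV => //; exact: ex_derive.
have dfx : derivable f x 1 by exact: ex_derive.
by rewrite deriveV // derive_val.
Qed.

Lemma isd_der {f x df} : isd x f df -> derivable f x 1.
Proof. by move=> [h]; exact: ex_derive. Qed.

Lemma d1E {f x df} : isd x f df -> (f^`())%classic x = df.
Proof. by move=> [h]; rewrite derive1E derive_val. Qed.

End derivs.

Section key.
Variable R : realType.
Variables (a b : R).
Hypotheses (a0 : 0 < a) (b0 : 0 < b).

Definition F (u : R) := u `^ (-b).
Definition F1 (u : R) := - b * u `^ (-b - 1).
Definition F2 (u : R) := b * (b + 1) * u `^ (-b - 1 - 1).
Definition F3 (u : R) := - (b * (b + 1) * (b + 2)) * u `^ (-b - 1 - 1 - 1).



Lemma dF (x : R) : 0 < x -> isd x F (F1 x).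
Proof. by move=> x0; apply: isdP. Qed.

Lemma dF1 (x : R) : 0 < x -> isd x F1 (F2 x).
Proof.
move=> x0; apply: isd_eq; first by apply: isdZ; apply: isdP.
rewrite /F2; ring.
Qed.

Lemma dF2 (x : R) : 0 < x -> isd x F2 (F3 x).
Proof.
move=> x0; apply: isd_eq; first by apply: isdZ; apply: isdP.
rewrite /F3; ring.
Qed.


Ltac dtac := repeat first [ apply: isdC | apply: dF | apply: dF1 | apply: dF2
  | apply: isdI | apply: isdB | apply: isdD | apply: isdV | apply: isdM | apply: isdZ ].

Definition kk (u : R) := F2 u * ((u - a) * (u - a)) - 2 * (F1 u * (u - a)) + 2 * F u - 2 * F a.

Lemma dkk (x : R) : 0 < x -> isd x kk (F3 x * ((x - a) * (x - a))).
Proof.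
move=> x0; apply: isd_eq; first by rewrite /kk; dtac.
rewrite /=; ring.
Qed.


Lemma kk_le0 (u : R) : a <= u -> kk u <= 0.
Proof.
move=> au.
have -> : 0 = kk a by rewrite /kk subrr; ring.
have H1 : forall x, x \in `]a, +oo[%R -> derivable kk x 1.
  move=> x; rewrite in_itv/= andbT => ax.
  exact: isd_der (dkk _ (lt_trans a0 ax)).
have H2 : forall x, x \in `]a, +oo[%R -> (kk^`())%classic x <= 0.
  move=> x; rewrite in_itv/= andbT => ax.
  rewrite (d1E (dkk _ (lt_trans a0 ax))).
  apply: mulr_le0_ge0; last by rewrite -expr2 sqr_ge0.
  rewrite /F3 mulNr oppr_le0; apply: mulr_ge0; last exact: powR_ge0.
  have hb := ltW b0; by apply: mulr_ge0; [apply: mulr_ge0|]; rewrite ?addr_ge0.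
have H3 : {within `[a, +oo[%classic, continuous kk}.
  apply: derivable_within_continuous => x; rewrite in_itv/= andbT => ax.
  exact: isd_der (dkk _ (lt_le_trans a0 ax)).
exact: (ler0_derive1_nincry H1 H2 H3 (lexx a) au).
Qed.

Definition NN (u : R) := F1 u * (u - a) - (F u - F a).

Lemma dNN (x : R) : 0 < x -> isd x NN (F2 x * (x - a)).
Proof.
move=> x0; apply: isd_eq; first by rewrite /NN; dtac.
rewrite /=; ring.
Qed.

Lemma NN_ge0 (u : R) : a <= u -> 0 <= NN u.
Proof.
move=> au.
have -> : 0 = NN a by rewrite /NN !subrr; ring.
have H1 : forall x, x \in `]a, +oo[%R -> derivable NN x 1.
  move=> x; rewrite in_itv/= andbT => ax.
  exact: isd_der (dNN _ (lt_trans a0 ax)).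
have H2 : forall x, x \in `]a, +oo[%R -> 0 <= (NN^`())%classic x.
  move=> x; rewrite in_itv/= andbT => ax.
  rewrite (d1E (dNN _ (lt_trans a0 ax))).
  apply: mulr_ge0; last lra.
  rewrite /F2; apply: mulr_ge0; last exact: powR_ge0.
  have hb := ltW b0; by apply: mulr_ge0; rewrite ?addr_ge0.
have H3 : {within `[a, +oo[%classic, continuous NN}.
  apply: derivable_within_continuous => x; rewrite in_itv/= andbT => ax.
  exact: isd_der (dNN _ (lt_le_trans a0 ax)).
exact: (ger0_derive1_ndecry H1 H2 H3 (lexx a) au).
Qed.


Definition DD (u : R) := NN u * ((u - a) * (u - a))^-1.

Lemma dsq (x : R) : isd x (fun y => (y - a) * (y - a)) ((x - a) * 1 + (x - a) * 1).
Proof.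
apply: isd_eq; first by apply: isdM; (apply: isdB; [exact: isdI | exact: isdC]).
by rewrite subr0.
Qed.

Lemma dDD (x : R) : a < x -> isd x DD (kk x * ((x - a) * (x - a) * (x - a))^-1).
Proof.
move=> ax; have x0 : 0 < x by exact: lt_trans a0 ax.
have xa : x - a != 0 by rewrite subr_eq0 gt_eqF.
apply: isd_eq.
  apply: isdM; first exact: dNN.
  by apply: isdV; [exact: dsq | rewrite mulf_neq0].
rewrite /= /kk /NN.
field; rewrite ?mulf_neq0 //.
Qed.


Definition gg (u : R) := (F u - F a) * (u - a)^-1.

Lemma dgg (x : R) : a < x -> isd x gg (DD x).
Proof.
move=> ax; have x0 : 0 < x by exact: lt_trans a0 ax.
have xa : x - a != 0 by rewrite subr_eq0 gt_eqF.
apply: isd_eq.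
  apply: isdM; first by apply: isdB; [exact: dF | exact: isdC].
  apply: isdV; last by []. by apply: isdB; [exact: isdI | exact: isdC].
rewrite /= /DD /NN.
field; rewrite ?mulf_neq0 //.
Qed.

Lemma DD_ge0 (t : R) : a < t -> 0 <= DD t.
Proof.
move=> at_; apply: mulr_ge0; first exact/NN_ge0/ltW.
by rewrite invr_ge0 -expr2 sqr_ge0.
Qed.

Lemma DD_nincr (y z : R) : a < y -> y <= z -> DD z <= DD y.
Proof.
move=> ay yz.
have H1 : forall x, x \in `]y, +oo[%R -> derivable DD x 1.
  move=> x; rewrite in_itv/= andbT => yx.
  exact: isd_der (dDD _ (lt_trans ay yx)).
have H2 : forall x, x \in `]y, +oo[%R -> (DD^`())%classic x <= 0.
  move=> x; rewrite in_itv/= andbT => yx.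
  have ax := lt_trans ay yx.
  rewrite (d1E (dDD _ ax)).
  apply: mulr_le0_ge0; first exact/kk_le0/ltW.
  have xa : 0 <= x - a by rewrite subr_ge0 ltW.
  by rewrite invr_ge0 !mulr_ge0.
have H3 : {within `[y, +oo[%classic, continuous DD}.
  apply: derivable_within_continuous => x; rewrite in_itv/= andbT => yx.
  exact: isd_der (dDD _ (lt_le_trans ay yx)).
exact: (ler0_derive1_nincry H1 H2 H3 (lexx y) yz).
Qed.

Definition psi (t u : R) := gg t + DD t * (u - t) - gg u.

Lemma dpsi (t x : R) : a < x -> isd x (psi t) (DD t - DD x).
Proof.
move=> ax; apply: isd_eq.
  apply: isdB; last exact: dgg.
  apply: isdD; first exact: isdC.
  by apply: isdZ; apply: isdB; [exact: isdI | exact: isdC].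
by rewrite /= subr0 mulr1 add0r.
Qed.

Lemma psi_ge0 (t u : R) : a < t -> a < u -> 0 <= psi t u.
Proof.
move=> at_ au.
have -> : 0 = psi t t by rewrite /psi subrr mulr0 addr0 subrr.
have [tu|ut] := leP t u.
  have H1 : forall x, x \in `]t, +oo[%R -> derivable (psi t) x 1.
    move=> x; rewrite in_itv/= andbT => tx.
    exact: isd_der (dpsi t _ (lt_trans at_ tx)).
  have H2 : forall x, x \in `]t, +oo[%R -> 0 <= ((psi t)^`())%classic x.
    move=> x; rewrite in_itv/= andbT => tx.
    rewrite (d1E (dpsi t _ (lt_trans at_ tx))) subr_ge0.
    exact/DD_nincr/ltW.
  have H3 : {within `[t, +oo[%classic, continuous (psi t)}.
    apply: derivable_within_continuous => x; rewrite in_itv/= andbT => tx.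
    exact: isd_der (dpsi t _ (lt_le_trans at_ tx)).
  exact: (ger0_derive1_ndecry H1 H2 H3 (lexx t) tu).
have H1 : forall x, x \in `]u, t[%R -> derivable (psi t) x 1.
  move=> x; rewrite in_itv/= => /andP[ux _].
  exact: isd_der (dpsi t _ (lt_trans au ux)).
have H2 : forall x, x \in `]u, t[%R -> ((psi t)^`())%classic x <= 0.
  move=> x; rewrite in_itv/= => /andP[ux xt].
  rewrite (d1E (dpsi t _ (lt_trans au ux))) subr_le0.
  exact: DD_nincr (lt_trans au ux) (ltW xt).
have H3 : {within `[u, t]%classic, continuous (psi t)}.
  apply: derivable_within_continuous => x; rewrite in_itv/= => /andP[ux _].
  exact: isd_der (dpsi t _ (lt_le_trans au ux)).
exact: (ler0_derive1_nincr H1 H2 H3 (lexx u) (ltW ut) (lexx t)).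
Qed.

Lemma key_ineq (t u : R) : a < t -> a <= u ->
  F u <= F a + (u - a) * (gg t + DD t * (u - t)).
Proof.
move=> at_; rewrite le_eqVlt => /predU1P[<-|au].
  by rewrite subrr mul0r addr0.
have ua : u - a != 0 by rewrite subr_eq0 gt_eqF.
have ta : t - a != 0 by rewrite subr_eq0 gt_eqF.
rewrite -subr_ge0.
have -> : F a + (u - a) * (gg t + DD t * (u - t)) - F u = (u - a) * psi t u.
  by rewrite /psi /gg; field; rewrite ua ta.
by apply: mulr_ge0; [rewrite subr_ge0 ltW | exact: psi_ge0].
Qed.

End key.

Lemma powR_le1plus (R : realType) (c b : R) : 0 < c -> 0 < b <= 1 ->
  c `^ b <= 1 + c.
Proof.
move=> c0 /andP[b0 b1].
have [h|h] := leP 1 c.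
  by have := ler1_powR h b1; lra.
have : c `^ b <= c `^ 0 by apply: ger_powR; [rewrite c0 ltW | exact: ltW].
rewrite powRr0; lra.
Qed.

Lemma h_ub (R : realType) (a b : R) : 0 < a -> 0 < b <= 1 -> forall x, 0 <= x ->
  h_fun a b x <= 1 + (1 + a) / a `^ b.
Proof.
move=> a0 b01 x x0; have /andP[b0 b1] := b01.
rewrite /h_fun.
set P1 := (a + x) `^ b; set P2 := (a + 1 + x) `^ b; set Q := a `^ b.
have P1pos : 0 < P1 by apply: powR_gt0; lra.
have P2pos : 0 < P2 by apply: powR_gt0; lra.
have Qpos : 0 < Q by apply: powR_gt0.
have P12 : P1 <= P2.
  by apply: (ge0_ler_powR (ltW b0)); rewrite ?nnegrE; lra.
have P1b : P1 <= 1 + (a + x) by apply: powR_le1plus => //; lra.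
have x1 : 0 < 1 + x by lra.
have -> : P1 / (1 + x) * (x / P2 + 1 / Q) = (P1 / P2) * (x / (1 + x)) + (P1 / (1 + x)) / Q.
  by field; rewrite ?gt_eqF.
have u1 : P1 / P2 <= 1 by rewrite ler_pdivrMr // mul1r.
have u0 : 0 <= P1 / P2 by rewrite divr_ge0 // ltW.
have v1 : x / (1 + x) <= 1 by rewrite ler_pdivrMr // mul1r; lra.
have v0 : 0 <= x / (1 + x) by rewrite divr_ge0 // ltW.
have w1 : P1 / (1 + x) <= 1 + a by rewrite ler_pdivrMr //; nra.
have : P1 / (1 + x) / Q <= (1 + a) / Q by rewrite ler_wpM2r // invr_ge0 ltW.
nra.
Qed.

Lemma h_le_Ctilde (R : realType) (a b : R) : 0 < a -> 0 < b <= 1 -> forall x, 0 <= x ->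
  h_fun a b x <= Ctilde a b.
Proof.
move=> a0 b01 x x0; rewrite /Ctilde; apply: ub_le_sup.
  exists (1 + (1 + a) / a `^ b) => _ [y y0 <-]; apply: h_ub => //.
  by move: y0; rewrite /= in_itv /= andbT.
by exists x => //=; rewrite in_itv /= andbT.
Qed.

Definition Yb {R : realType} (x : R) (w : bool) : R := if w then 1 + x else 0.

Lemma mYb {R : realType} (x : R) : measurable_fun setT (Yb x).
Proof. by move=> _ U _. Qed.

HB.instance Definition _ {R : realType} (x : R) :=
  isMeasurableFun.Build _ _ _ _ (Yb x) (mYb x).

Lemma part2 (R : realType) (alpha beta : R) :
  0 < alpha -> 0 < beta <= 1 ->
  (forall C : R, C < Ctilde alpha beta ->
     exists (d : measure_display) (T : measurableType d) (P : probability T R)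
       (Y : {RV P >-> R}),
       [/\ forall w, 0 <= Y w,
           ('E_P[fun w => (Y w ^+ 2)%R] < +oo)%E,
           ('V_P[Y] <= 'E_P[Y])%E &
           ((C / (alpha + fine 'E_P[Y]) `^ beta)%:E
              < 'E_P[fun w => (1 / (alpha + Y w) `^ beta)%R])%E]).
Proof.
move=> a0 /andP[b0 b1] C hC.
have S0 : [set h_fun alpha beta x | x in `[0, +oo[%classic] !=set0.
  by exists (h_fun alpha beta 0), 0 => //=; rewrite in_itv /= lexx.
have [_ [x x0 <-] Cx] := sup_gt S0 hC.
have {}x0 : 0 <= x by move: x0; rewrite /= in_itv /= andbT.
set p := x / (1 + x).
have x1 : 0 < 1 + x by lra.
have p0 : 0 <= p by rewrite divr_ge0 // ltW.
have p1 : p <= 1 by rewrite ler_pdivrMr // mul1r; lra.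
have p01 : 0 <= p <= 1 by rewrite p0 p1.
pose Y : {mfun bool >-> R} := Yb x.
exists _, bool, (bernoulli_prob p), Y.
have EE (f : bool -> R) : (forall w, 0 <= f w) ->
    ('E_(bernoulli_prob p)[f] = (p * f true + (1 - p) * f false)%:E)%E.
  move=> f0; rewrite unlock integral_bernoulli_prob //.
have EY : ('E_(bernoulli_prob p)[Y] = x%:E)%E.
  rewrite EE; last by case => /=; rewrite /Yb; lra.
  rewrite /= /Yb /p; congr (_%:E); field; rewrite gt_eqF //; lra.
split.
- by case => /=; rewrite /Yb; lra.
- by rewrite EE ?ltry // => w; rewrite sqr_ge0.
- rewrite /variance covariance.unlock EY /= EE; last by move=> w; rewrite /= -expr2 sqr_ge0.
  rewrite lee_fin /= /Yb /p.
  rewrite -[_ true]/((1 + x - x) * (1 + x - x)) -[_ false]/((0 - x) * (0 - x)).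
  rewrite le_eqVlt; apply/orP; left; apply/eqP.
  by field; rewrite gt_eqF //; lra.
- rewrite EY /= EE; last by move=> w; rewrite divr_ge0 ?powR_ge0.
  rewrite lte_fin /= /Yb addr0.
  have n1 : (alpha + x) `^ beta != 0 by rewrite gt_eqF // powR_gt0 //; lra.
  have n2 : (alpha + 1 + x) `^ beta != 0 by rewrite gt_eqF // powR_gt0 //; lra.
  have n3 : alpha `^ beta != 0 by rewrite gt_eqF // powR_gt0.
  have n4 : 1 + x != 0 by rewrite gt_eqF.
  have -> : p * (1 / (alpha + (1 + x)) `^ beta) + (1 - p) * (1 / alpha `^ beta)
      = h_fun alpha beta x / (alpha + x) `^ beta.
    rewrite /h_fun /p addrA.
    by field; rewrite ?n1 ?n2 ?n3 ?n4.
  by rewrite ltr_pM2r // invr_gt0 powR_gt0 //; lra.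
Qed.

Lemma part1 (R : realType) (alpha beta : R) : 0 < alpha -> 0 < beta <= 1 ->
  forall (d : measure_display) (T : measurableType d) (P : probability T R)
     (Y : {RV P >-> R}),
     (forall w, 0 <= Y w) ->
     ('E_P[fun w => (Y w ^+ 2)%R] < +oo)%E ->
     ('V_P[Y] <= 'E_P[Y])%E ->
     ('E_P[fun w => (1 / (alpha + Y w) `^ beta)%R]
        <= (Ctilde alpha beta / (alpha + fine 'E_P[Y]) `^ beta)%:E)%E.
Proof.
move=> a0 b01 d T P Y Y0 hY2 hV; have /andP[b0 b1] := b01.
have mY : measurable_fun setT (Y : T -> R) := @measurable_funPT _ _ _ _ Y.
have iY2 : P.-integrable setT (EFin \o (fun w => Y w ^+ 2)).
  apply/integrableP; split.
    by apply/measurable_EFinP; exact: measurable_funX.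
  rewrite (eq_integral (fun w => (Y w ^+ 2)%:E)); first by move: hY2; rewrite unlock.
  by move=> w _; rewrite /= ger0_norm // sqr_ge0.
have L2 : (fun w => Y w ^+ 2) \in Lfun P 1 by apply/Lfun1_integrable.
have LY : (Y : T -> R) \in Lfun P 1.
  apply/Lfun1_integrable.
  have L12 : (cst 1 + (fun w => Y w ^+ 2)) \in Lfun P 1.
    by apply: rpredD => //; exact: Lfun_cst.
  apply: (le_integrable _ _ _ (proj1 (Lfun1_integrable _ _) L12)) => //.
    exact/measurable_EFinP.
  move=> w _; rewrite /= lee_fin !ger0_norm //; last by rewrite -[(_ + _) w]/(1 + Y w ^+ 2) addr_ge0 // sqr_ge0.
  rewrite -[(_ + _) w]/(1 + Y w ^+ 2); have := Y0 w; nra.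
set m := fine ('E_P[Y])%E.
have EY : ('E_P[Y] = m%:E)%E by rewrite fineK // expectation_fin_num.
have m0 : 0 <= m by rewrite /m fine_ge0 // expectation_ge0.
pose Z := ((Y : T -> R) \- cst m) * ((Y : T -> R) \- cst m).
have VZ : ('V_P[Y] = 'E_P[Z])%E by rewrite /variance covariance.unlock.
have Zw w : Z w = (Y w - m) * (Y w - m) by [].
have Z0 w : 0 <= Z w by rewrite Zw -expr2 sqr_ge0.
have mZ : measurable_fun setT Z.
  by apply: measurable_funM; apply: measurable_funB => //; exact: measurable_cst.
have EZlt : ('E_P[Z] < +oo)%E by rewrite -VZ (le_lt_trans hV) // EY ltry.
have LZ : Z \in Lfun P 1.
  apply/Lfun1_integrable; apply/integrableP; split; first exact/measurable_EFinP.
  rewrite (eq_integral (fun w => (Z w)%:E)); first by move: EZlt; rewrite unlock.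
  by move=> w _; rewrite /= ger0_norm.
set v := fine ('E_P[Z])%E.
have EZ : ('E_P[Z] = v%:E)%E by rewrite fineK // expectation_fin_num.
have vm : v <= m by move: hV; rewrite VZ EZ EY lee_fin.
pose t := alpha + 1 + m.
have at_ : alpha < t by rewrite /t; lra.
pose c := DD _ alpha beta t; pose G := gg _ alpha beta t.
have c0 : 0 <= c := @DD_ge0 _ _ _ a0 b0 _ at_.
pose A := F _ beta alpha - c * (m * m).
pose B := G + 2 * c * m - c * (1 + m).
pose W := (cst A \+ B \o* (Y : T -> R)) \+ c \o* Z.
have LW : W \in Lfun P 1 by rewrite rpredD // ?rpredD ?Lfun_cst // Lfun_scale.
have EW : ('E_P[W] = (A + B * m + c * v)%:E)%E.
  rewrite /W expectationD ?rpredD ?Lfun_cst ?Lfun_scale //.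
  rewrite expectationD ?Lfun_cst ?Lfun_scale // expectation_cst !expectationZl //.
  have EY2 : ('E_P[(Y : T -> R)] = m%:E)%E := EY.
  by rewrite EY2 EZ.
have Wpt w : W w = A + Y w * B + Z w * c by [].
have feq : (fun w => 1 / (alpha + Y w) `^ beta) = (fun w => F _ beta (alpha + Y w)).
  by apply/funext => w; rewrite /F powRN div1r.
have Fle w : F _ beta (alpha + Y w) <= W w.
  have h := @key_ineq _ _ _ a0 b0 _ (alpha + Y w) at_.
  apply: (le_trans (h _)); first by have := Y0 w; lra.
  rewrite Wpt Zw /A /B /G /c; rewrite le_eqVlt; apply/orP; left; apply/eqP.
  rewrite /t; ring.
rewrite feq; apply: (le_trans (y := 'E_P[W]%E)).
  apply: expectation_le.
  - apply: measurableT_comp; first exact: measurable_powR.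
    by apply: measurable_funD => //; exact: measurable_cst.
  - by have := sub_Lfun_mfun LW; rewrite inE.
  - by move=> w; rewrite /F powR_ge0.
  - by move=> w; apply: le_trans (Fle w); rewrite /F powR_ge0.
  - by apply: aeW => w; exact: Fle.
rewrite EW lee_fin.
have n1 : (alpha + m) `^ beta != 0 by rewrite gt_eqF // powR_gt0 //; lra.
have n2 : (alpha + 1 + m) `^ beta != 0 by rewrite gt_eqF // powR_gt0 //; lra.
have n3 : alpha `^ beta != 0 by rewrite gt_eqF // powR_gt0.
have n4 : 1 + m != 0 by rewrite gt_eqF //; lra.
have n5 : alpha + 1 + m - alpha != 0 by rewrite gt_eqF //; lra.
have -> : A + B * m + c * v = F _ beta alpha + G * m - c * (m - v).
  by rewrite /A /B; ring.
have -> : F _ beta alpha + G * m = h_fun alpha beta m / (alpha + m) `^ beta.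
  rewrite /G /gg /F /h_fun /t !powRN.
  by field; rewrite ?n1 ?n2 ?n3 ?n4 ?n5.
have hC := @h_le_Ctilde _ _ _ a0 b01 _ m0.
have cv : 0 <= c * (m - v) by rewrite mulr_ge0 // subr_ge0.
have : h_fun alpha beta m / (alpha + m) `^ beta <= Ctilde alpha beta / (alpha + m) `^ beta.
  by rewrite ler_wpM2r // invr_ge0 powR_ge0.
lra.
Qed.

Theorem mainTheorem9 (R : realType) (alpha beta : R) :
  0 < alpha -> 0 < beta <= 1 ->
  (forall (d : measure_display) (T : measurableType d) (P : probability T R)
     (Y : {RV P >-> R}),
     (forall w, 0 <= Y w) ->
     ('E_P[fun w => (Y w ^+ 2)%R] < +oo)%E ->
     ('V_P[Y] <= 'E_P[Y])%E ->
     ('E_P[fun w => (1 / (alpha + Y w) `^ beta)%R]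
        <= (Ctilde alpha beta / (alpha + fine 'E_P[Y]) `^ beta)%:E)%E)
  /\
  (forall C : R, C < Ctilde alpha beta ->
     exists (d : measure_display) (T : measurableType d) (P : probability T R)
       (Y : {RV P >-> R}),
       [/\ forall w, 0 <= Y w,
           ('E_P[fun w => (Y w ^+ 2)%R] < +oo)%E,
           ('V_P[Y] <= 'E_P[Y])%E &
           ((C / (alpha + fine 'E_P[Y]) `^ beta)%:E
              < 'E_P[fun w => (1 / (alpha + Y w) `^ beta)%R])%E]).
Proof.
move=> a0 b01; split; first exact: (@part1 _ _ _ a0 b01).
exact: (@part2 _ _ _ a0 b01).
Qed.
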